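(* Let $\{(\mathcal X^k, P_{Y_k|X_{[k]}}, \mathcal Y_k)\}_{k=0}^K$ be a RAC satisfying permutation-invariance and reducibility. Let $P_X$ be an input distribution under which friendliness and interference hold, and let $X_1,X_2,\dots$ be i.i.d. $P_X$. Then for all integers $1\le s<k\le K$, $$\frac{I_k}{k}<\frac{I_s}{s}.$$
   Context: A RAC is a family of stationary memoryless multiple access channels $\{(\mathcal X^k, P_{Y_k|X_{[k]}}(y_k|x_{[k]}), \mathcal Y_k)\}_{k=0}^K$, $K\le\infty$. The $k$-th channel has $k$ inputs, each taking values in a common alphabet $\mathcal X$ that contains a distinguished ''silence'' symbol $0$, and it has output alphabet $\mathcal Y_k$. Write $[k]=\{1,\dots,k\}$ and $[i:j]=\{i,\dots,j\}$. Permutation-invariance: for every $k$ and every permutation $\hat x_{[k]}$ of $x_{[k]}$, $P_{Y_k|X_{[k]}}(y|x_{[k]})=P_{Y_k|X_{[k]}}(y|\hat x_{[k]})$. Reducibility: for all $s<k$, all $x_{[s]}\in\mathcal X^s$ and all $y\in\mathcal Y_s$, $P_{Y_s|X_{[s]}}(y|x_{[s]})=P_{Y_k|X_{[k]}}(y|x_{[s]},0^{k-s})$. Given $P_X$, let $X_1,\dots,X_k$ be i.i.d. $P_X$ and let $Y_k$ be the output of the $k$-th channel. Mutual informations $I_k(X_{\mathcal A};Y_k\mid X_{\mathcal B})$ are computed under this joint law, and $I_k:=I_k(X_{[k]};Y_k)$. Friendliness: for all $s\le k\le K$, $I_k(X_{[s]};Y_k\mid X_{[s+1:k]}=0^{k-s})\ge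 I_k(X_{[s]};Y_k\mid X_{[s+1:k]})$. Interference: for every $k$ and all $1\le s<t\le k$, $P_{X_{[t]}|Y_k}\neq P_{X_{[s]}|Y_k}\cdot P_{X_{[s+1:t]}|Y_k}$, i.e. $X_{[s]}$ and $X_{[s+1:t]}$ are not conditionally independent given $Y_k$. *)

(* Defs.v *)
From Stdlib Require Import Reals.
From mathcomp Require Import all_boot all_fingroup.

Set Implicit Arguments.
Unset Strict Implicit.
Unset Printing Implicit Defensive.

Local Open Scope R_scope.

Section RAC.
Variables (X : finType) (Y : eqType).

Definition inp (k : nat) := {ffun 'I_k -> X}.

(* A channel family: W k x y = P_{Y_k|X_[k]}(y | x); Ysupp k = output alphabet Y_k. *)
Definition chan := forall k : nat, inp k -> Y -> R.

Definition sumX k (F : inp k -> R) : R := \big[Rplus/0]_(x : inp k) F x.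
Definition sumY (Ys : seq Y) (F : Y -> R) : R := \big[Rplus/0]_(y <- Ys) F y.

Definition is_dist (PX : X -> R) : Prop :=
  (forall a, 0 <= PX a) /\ \big[Rplus/0]_(a : X) PX a = 1.

Definition is_RAC (Ysupp : nat -> seq Y) (W : chan) : Prop :=
  forall k, uniq (Ysupp k) /\
    forall x : inp k,
      (forall y, 0 <= W k x y) /\
      (forall y, y \notin Ysupp k -> W k x y = 0) /\
      sumY (Ysupp k) (W k x) = 1.

(* K <= infinity: None = infinity. *)
Definition inK (K : option nat) (k : nat) : Prop :=
  match K with Some n => (k <= n)%N | None => True end.

Definition perm_invariant (K : option nat) (W : chan) : Prop :=
  forall k, inK K k -> forall (sigma : {perm 'I_k}) (x : inp k) (y : Y),
    W k [ffun i => x (sigma i)] y = W k x y.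

(* (x_[s], 0^{k-s}) as an element of X^k. *)
Definition pad (x0 : X) (s k : nat) (x : inp s) : inp k :=
  [ffun i : 'I_k => if @insub nat (fun n => (n < s)%N) 'I_s (val i) is Some j
                    then x j else x0].

Definition reducible (K : option nat) (x0 : X) (Ysupp : nat -> seq Y) (W : chan) : Prop :=
  forall s k, (s < k)%N -> inK K k -> forall (x : inp s) (y : Y), y \in Ysupp s ->
    W s x y = W k (pad x0 k x) y.

Definition law (PX : X -> R) (W : chan) k (x : inp k) (y : Y) : R :=
  (\big[Rmult/1]_(i : 'I_k) PX (x i)) * W k x y.

(* Conditional law of (X_[k], Y_k) given X_B = b_B.  Since the inputs are
   independent this is prod_{i notin B} P_X(x_i) * 1[x_B = b_B] * W(y|x). *)
Definition claw (PX : X -> R) (W : chan) k (B : pred 'I_k) (b : inp k)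
  (x : inp k) (y : Y) : R :=
  (\big[Rmult/1]_(i : 'I_k | ~~ B i) PX (x i)) *
  (if [forall i, B i ==> (x i == b i)] then 1 else 0) * W k x y.

Variable Ysupp : nat -> seq Y.

Definition Ex k (L : inp k -> Y -> R) (F : inp k -> Y -> R) : R :=
  sumX (fun x => sumY (Ysupp k) (fun y => L x y * F x y)).
Definition Pr k (L : inp k -> Y -> R) (E : inp k -> Y -> bool) : R :=
  Ex L (fun x y => if E x y then 1 else 0).

Definition MI k (L : inp k -> Y -> R) (U V : eqType)
  (f : inp k -> Y -> U) (g : inp k -> Y -> V) : R :=
  Ex L (fun x y =>
    ln (Pr L (fun x' y' => (f x' y' == f x y) && (g x' y' == g x y)) /
        (Pr L (fun x' y' => f x' y' == f x y) * Pr L (fun x' y' => g x' y' == g x y)))).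

Definition CMI k (L : inp k -> Y -> R) (U V Z : eqType)
  (f : inp k -> Y -> U) (g : inp k -> Y -> V) (h : inp k -> Y -> Z) : R :=
  Ex L (fun x y =>
    ln (Pr L (fun x' y' => [&& f x' y' == f x y, g x' y' == g x y & h x' y' == h x y]) *
        Pr L (fun x' y' => h x' y' == h x y) /
        (Pr L (fun x' y' => (f x' y' == f x y) && (h x' y' == h x y)) *
         Pr L (fun x' y' => (g x' y' == g x y) && (h x' y' == h x y))))).

(* X_{[a+1:b]} = (X_{a+1},...,X_b) (1-based), i.e. indices a <= i < b (0-based). *)
Definition Xrange k (a b : nat) (x : inp k) (_ : Y) : seq X :=
  [seq x i | i <- enum 'I_k & (a <= val i < b)%N].
Definition Yout k (_ : inp k) (y : Y) : Y := y.

Definition Ik (PX : X -> R) (W : chan) (k : nat) : R :=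
  MI (law PX W (k:=k)) (Xrange 0 k) (@Yout k).

Definition friendly (K : option nat) (x0 : X) (PX : X -> R) (W : chan) : Prop :=
  forall s k, (s <= k)%N -> inK K k ->
    MI (claw PX W (fun i : 'I_k => (s <= val i)%N) [ffun => x0]) (Xrange 0 s) (@Yout k)
    >= CMI (law PX W (k:=k)) (Xrange 0 s) (@Yout k) (Xrange s k).

(* Interference: X_[s] and X_[s+1:t] are not conditionally independent given Y_k. *)
Definition interference (K : option nat) (PX : X -> R) (W : chan) : Prop :=
  forall k s t, inK K k -> (1 <= s)%N -> (s < t)%N -> (t <= k)%N ->
    ~ (forall (x : inp k) (y : Y),
         let L := law PX W (k:=k) in
         let py := Pr L (fun x' y' => y' == y) in
         0 < py ->
         Pr L (fun x' y' => (Xrange 0 t x' y' == Xrange 0 t x y) && (y' == y)) / py =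
         (Pr L (fun x' y' => (Xrange 0 s x' y' == Xrange 0 s x y) && (y' == y)) / py) *
         (Pr L (fun x' y' => (Xrange s t x' y' == Xrange s t x y) && (y' == y)) / py)).

End RAC.

(* Main.v *)
Require Import Defs.
From Stdlib Require Import Reals.
From mathcomp Require Import all_boot all_fingroup.
From HB Require Import structures.
From Stdlib Require Import Lra Lia.
From Stdlib Require List.
From mathcomp Require Import zify.

Set Implicit Arguments.
Unset Strict Implicit.
Unset Printing Implicit Defensive.
Local Open Scope R_scope.

Lemma RplusA' : associative Rplus. Proof. by move=> a b c; rewrite Rplus_assoc. Qed.
HB.instance Definition _ := Monoid.isComLaw.Build R 0 Rplus RplusA' Rplus_comm Rplus_0_l.

Section Sums.
Variable T : Type.

Lemma sumD (r : seq T) (F G : T -> R) :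
  \big[Rplus/0]_(w <- r) (F w + G w) = \big[Rplus/0]_(w <- r) F w + \big[Rplus/0]_(w <- r) G w.
Proof. elim: r => [|a r IH]; rewrite ?big_nil ?big_cons; [lra|rewrite IH; lra]. Qed.

Lemma sumN (r : seq T) (F : T -> R) :
  \big[Rplus/0]_(w <- r) (- F w) = - \big[Rplus/0]_(w <- r) F w.
Proof. elim: r => [|a r IH]; rewrite ?big_nil ?big_cons; [lra|rewrite IH; lra]. Qed.

Lemma sumZ (r : seq T) (c : R) (F : T -> R) :
  \big[Rplus/0]_(w <- r) (c * F w) = c * \big[Rplus/0]_(w <- r) F w.
Proof. elim: r => [|a r IH]; rewrite ?big_nil ?big_cons; [lra|rewrite IH; lra]. Qed.

Lemma sumZr (r : seq T) (c : R) (F : T -> R) :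
  \big[Rplus/0]_(w <- r) (F w * c) = (\big[Rplus/0]_(w <- r) F w) * c.
Proof. elim: r => [|a r IH]; rewrite ?big_nil ?big_cons; [lra|rewrite IH; lra]. Qed.

Lemma sum_ext (r : seq T) (F G : T -> R) :
  (forall w, List.In w r -> F w = G w) ->
  \big[Rplus/0]_(w <- r) F w = \big[Rplus/0]_(w <- r) G w.
Proof.
elim: r => [|a r IH] H; rewrite ?big_nil ?big_cons //.
by rewrite (H a (or_introl erefl)) IH // => w h; apply: H; right.
Qed.

Lemma sum_le (r : seq T) (F G : T -> R) :
  (forall w, List.In w r -> F w <= G w) ->
  \big[Rplus/0]_(w <- r) F w <= \big[Rplus/0]_(w <- r) G w.
Proof.
elim: r => [|a r IH] H; rewrite ?big_nil ?big_cons; first lra.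
have := H a (or_introl erefl); have := IH (fun w h => H w (or_intror h)); lra.
Qed.

Lemma sum_ge0 (r : seq T) (F : T -> R) :
  (forall w, List.In w r -> 0 <= F w) -> 0 <= \big[Rplus/0]_(w <- r) F w.
Proof.
move=> H; have := @sum_le r (fun _ => 0) F H.
have -> : \big[Rplus/0]_(w <- r) (fun _ => 0) w = 0 by elim: r {H} => [|a r IH]; rewrite ?big_nil ?big_cons ?IH; lra.
done.
Qed.

Lemma sum_lt (r : seq T) (F G : T -> R) :
  (forall w, List.In w r -> F w <= G w) -> (exists w, List.In w r /\ F w < G w) ->
  \big[Rplus/0]_(w <- r) F w < \big[Rplus/0]_(w <- r) G w.
Proof.
elim: r => [|a r IH] H [w [Hw Hlt]]; first by case: Hw.
rewrite !big_cons; case: Hw => [Ha|Hw]; [subst a|].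
  have := @sum_le r F G (fun w h => H w (or_intror h)); lra.
have := IH (fun w h => H w (or_intror h)) (ex_intro _ w (conj Hw Hlt)).
have := H a (or_introl erefl); lra.
Qed.

Lemma sum_eq_le (r : seq T) (F G : T -> R) :
  (forall w, List.In w r -> F w <= G w) ->
  \big[Rplus/0]_(w <- r) G w <= \big[Rplus/0]_(w <- r) F w ->
  forall w, List.In w r -> F w = G w.
Proof.
move=> H Hs w Hw; case: (Rle_lt_or_eq_dec _ _ (H w Hw)) => // Hlt.
have := @sum_lt r F G H (ex_intro _ w (conj Hw Hlt)); lra.
Qed.

Lemma sum_single (r : seq T) (F : T -> R) w :
  (forall w, List.In w r -> 0 <= F w) -> List.In w r -> F w <= \big[Rplus/0]_(w <- r) F w.
Proof.
elim: r => [|a r IH] H Hw; first by case: Hw.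
rewrite big_cons; case: Hw => [Ha|Hw]; [subst a|].
  have := @sum_ge0 r F (fun w h => H w (or_intror h)); lra.
have := IH (fun w h => H w (or_intror h)) Hw; have := H a (or_introl erefl); lra.
Qed.

Lemma sum_pos_ex (r : seq T) (F : T -> R) :
  0 < \big[Rplus/0]_(w <- r) F w -> exists w, List.In w r /\ F w <> 0.
Proof.
elim: r => [|a r IH]; rewrite ?big_nil ?big_cons; first lra.
move=> H; case: (Req_dec (F a) 0) => Ha.
  have [|w [Hw Hw']] := IH; first lra.
  by exists w; split; [right|].
by exists a; split; [left|].
Qed.

Lemma sum_exchange (T' : Type) (r : seq T) (r' : seq T') (F : T -> T' -> R) :
  \big[Rplus/0]_(w <- r) \big[Rplus/0]_(w' <- r') F w w' =
  \big[Rplus/0]_(w' <- r') \big[Rplus/0]_(w <- r) F w w'.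
Proof. exact: exchange_big. Qed.

End Sums.

Definition ind (b : bool) : R := if b then 1 else 0.

Lemma ln_le_m1 t : 0 < t -> ln t <= t - 1.
Proof. move=> Ht; have := exp_ineq1_le (ln t); rewrite exp_ln //; lra. Qed.

Lemma ln_lt_m1 t : 0 < t -> t <> 1 -> ln t < t - 1.
Proof.
move=> Ht H1; have H : ln t <> 0 by apply: ln_neq_0.
have := @exp_ineq1 (ln t) H; rewrite exp_ln //; lra.
Qed.

Definition equivb T (E : T -> T -> bool) :=
  (forall a, E a a) /\ (forall a b, E a b -> E b a) /\ (forall a b c, E a b -> E b c -> E a c).

Lemma equivb_sym T (E : T -> T -> bool) a b : equivb E -> E a b = E b a.
Proof. by case=> _ [Hs _]; apply/idP/idP => /Hs. Qed.

Lemma equivb_l T (E : T -> T -> bool) a b c : equivb E -> E a b -> E a c = E b c.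
Proof.
case=> _ [Hs Ht] Hab; apply/idP/idP => H; first exact: Ht (Hs _ _ Hab) H.
exact: Ht Hab H.
Qed.

Section Gibbs.
Variables (T : Type) (r : seq T) (L : T -> R).
Hypothesis L0 : forall w, 0 <= L w.
Implicit Types E : T -> T -> bool.

Definition PE (E : T -> T -> bool) w := \big[Rplus/0]_(w' <- r) (L w' * ind (E w w')).
Definition Hn E := \big[Rplus/0]_(w <- r) (L w * ln (PE E w)).

Lemma ind_ge0 b : 0 <= ind b. Proof. by case: b => /=; lra. Qed.

Lemma PE_ge0 E w : 0 <= PE E w.
Proof. apply: sum_ge0 => w' _; have := L0 w'; have := ind_ge0 (E w w'); nra. Qed.

Lemma PE_self E w : E w w -> List.In w r -> L w <= PE E w.
Proof.
move=> Hw Hin; have := @sum_single _ r (fun w' => L w' * ind (E w w')) w.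
rewrite /PE /ind Hw Rmult_1_r; apply=> // w' _; have := L0 w'; have := ind_ge0 (E w w'); rewrite /ind; nra.
Qed.

Lemma PE_pos E w : E w w -> List.In w r -> 0 < L w -> 0 < PE E w.
Proof. move=> H1 H2 H3; have := PE_self H1 H2; lra. Qed.

Lemma PE_inv E a b : equivb E -> E a b -> PE E a = PE E b.
Proof. by move=> He Hab; apply: sum_ext => w _; rewrite (equivb_l w He Hab). Qed.

Lemma PE_mono (E E' : T -> T -> bool) w : (forall a b, E a b -> E' a b) -> PE E w <= PE E' w.
Proof.
move=> H; apply: sum_le => w' _; have := L0 w'; rewrite /ind.
case E1: (E w w'); first by rewrite (H _ _ E1); lra.
case: (E' w w'); lra.
Qed.

Lemma PE_pos_ex E w : 0 < PE E w -> exists w', List.In w' r /\ 0 < L w' /\ E w w'.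
Proof.
move=> /sum_pos_ex [w' [H1 H2]]; exists w'; split=> //.
move: H2; rewrite /ind; have := L0 w'; case: (E w w') => H; last lra.
by split=> //; lra.
Qed.

Variables E1 E2 Eh : T -> T -> bool.
Hypotheses (eq1 : equivb E1) (eq2 : equivb E2) (eqh : equivb Eh).
Hypotheses (s1 : forall a b, E1 a b -> Eh a b) (s2 : forall a b, E2 a b -> Eh a b).
Definition E12 a b := E1 a b && E2 a b.

Lemma eq12 : equivb E12.
Proof.
case: eq1 => r1 [y1 t1]; case: eq2 => r2 [y2 t2]; rewrite /E12; split; first by move=> a; rewrite r1 r2.
split; first by move=> a b /andP[/y1 -> /y2 ->].
by move=> a b c /andP[h1 h2] /andP[h3 h4]; rewrite (t1 _ _ _ h1 h3) (t2 _ _ _ h2 h4).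
Qed.

Notation p := (PE E12).
Notation p1 := (PE E1).
Notation p2 := (PE E2).
Notation ph := (PE Eh).

Definition cmi := Hn E12 + Hn Eh - Hn E1 - Hn E2.
Definition tq w := p1 w * p2 w / (ph w * p w).

Lemma refl1 w : E1 w w. Proof. by case: eq1. Qed.
Lemma refl2 w : E2 w w. Proof. by case: eq2. Qed.
Lemma reflh w : Eh w w. Proof. by case: eqh. Qed.
Lemma refl12 w : E12 w w. Proof. by case: eq12. Qed.

Lemma stepA : - cmi = \big[Rplus/0]_(w <- r) (L w * (ln (p1 w) + ln (p2 w) - ln (p w) - ln (ph w))).
Proof.
rewrite /cmi /Hn.
rewrite -[X in _ = X](@sum_ext _ r (fun w => L w * ln (p1 w) + L w * ln (p2 w) + - (L w * ln (p w)) + - (L w * ln (ph w)))); last by move=> w _; ring.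
rewrite !sumD !sumN; ring.
Qed.

Lemma termA w : List.In w r ->
  L w * (ln (p1 w) + ln (p2 w) - ln (p w) - ln (ph w)) <= L w * tq w - L w.
Proof.
move=> Hw; case: (Rle_lt_or_eq_dec _ _ (L0 w)) => Hl; last by rewrite -Hl; lra.
have pp := PE_pos (refl12 w) Hw Hl; have pp1 := PE_pos (refl1 w) Hw Hl.
have pp2 := PE_pos (refl2 w) Hw Hl; have pph := PE_pos (reflh w) Hw Hl.
have Ht : 0 < tq w by rewrite /tq; apply: Rdiv_lt_0_compat; apply: Rmult_lt_0_compat.
have -> : ln (p1 w) + ln (p2 w) - ln (p w) - ln (ph w) = ln (tq w).
  rewrite /tq /Rdiv ln_mult; last by apply: Rinv_0_lt_compat; apply: Rmult_lt_0_compat.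
    rewrite ln_mult // ln_Rinv; last by apply: Rmult_lt_0_compat.
    rewrite ln_mult //; ring.
  by apply: Rmult_lt_0_compat.
have := ln_le_m1 Ht; nra.
Qed.

Lemma termA_eq w : List.In w r -> 0 < L w ->
  L w * (ln (p1 w) + ln (p2 w) - ln (p w) - ln (ph w)) = L w * tq w - L w -> tq w = 1.
Proof.
move=> Hw Hl Heq; have pp := PE_pos (refl12 w) Hw Hl; have pp1 := PE_pos (refl1 w) Hw Hl.
have pp2 := PE_pos (refl2 w) Hw Hl; have pph := PE_pos (reflh w) Hw Hl.
have Ht : 0 < tq w by rewrite /tq; apply: Rdiv_lt_0_compat; apply: Rmult_lt_0_compat.
have E : ln (p1 w) + ln (p2 w) - ln (p w) - ln (ph w) = ln (tq w).
  rewrite /tq /Rdiv ln_mult; last by apply: Rinv_0_lt_compat; apply: Rmult_lt_0_compat.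
    rewrite ln_mult // ln_Rinv; last by apply: Rmult_lt_0_compat.
    rewrite ln_mult //; ring.
  by apply: Rmult_lt_0_compat.
rewrite E in Heq; case: (Req_dec (tq w) 1) => // H1.
have := ln_lt_m1 Ht H1; nra.
Qed.

Definition Term w1 w2 := \big[Rplus/0]_(w <- r)
   (L w * (L w1 * ind (E1 w w1)) * (L w2 * ind (E2 w w2)) / (ph w * p w)).
Definition cc w1 w2 := \big[Rplus/0]_(w <- r) (L w * ind (E1 w1 w && E2 w2 w)).
Definition R12 w1 w2 := L w1 * L w2 * ind (Eh w1 w2) / ph w1.

Lemma expandD w : L w * tq w = \big[Rplus/0]_(w1 <- r) \big[Rplus/0]_(w2 <- r)
   (L w * (L w1 * ind (E1 w w1)) * (L w2 * ind (E2 w w2)) / (ph w * p w)).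
Proof.
rewrite /tq; set A := ph w * p w.
transitivity (L w / A * (p1 w * p2 w)); first by rewrite /Rdiv; ring.
rewrite [PE E1 w]/PE [PE E2 w]/PE -sumZr -sumZ; apply: sum_ext => w1 _.
rewrite -sumZ -sumZ; apply: sum_ext => w2 _; rewrite /Rdiv; ring.
Qed.

Lemma D_eq : \big[Rplus/0]_(w <- r) (L w * tq w) =
  \big[Rplus/0]_(w1 <- r) \big[Rplus/0]_(w2 <- r) Term w1 w2.
Proof.
rewrite (@sum_ext _ r _ _ (fun w _ => expandD w)) sum_exchange.
apply: sum_ext => w1 _; rewrite sum_exchange //.
Qed.

Lemma Term_val w1 w2 : Term w1 w2 = L w1 * L w2 / (ph w1 * cc w1 w2) * cc w1 w2.
Proof.
rewrite /cc -sumZ; apply: sum_ext => w _.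
case Hc: (E1 w1 w && E2 w2 w); last first.
  rewrite /ind (equivb_sym w w1 eq1) (equivb_sym w w2 eq2).
  by move: Hc; case: (E1 w1 w); case: (E2 w2 w) => //= _; rewrite /Rdiv ?(Rmult_0_r, Rmult_0_l).
case/andP: Hc => h1 h2; rewrite /ind (equivb_sym w w1 eq1) (equivb_sym w w2 eq2) h1 h2 /=.
have -> : ph w = ph w1 by rewrite (PE_inv eqh (s1 h1)).
have -> : p w = cc w1 w2.
  apply: sum_ext => w' _; rewrite /E12.
  by rewrite (equivb_l w' eq1 h1) (equivb_l w' eq2 h2).
rewrite /cc /ind /Rdiv; ring.
Qed.

Lemma cc_ge0 w1 w2 : 0 <= cc w1 w2.
Proof. apply: sum_ge0 => w _; have := L0 w; have := ind_ge0 (E1 w1 w && E2 w2 w); nra. Qed.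

Lemma Rinv_ge0' x : 0 <= x -> 0 <= / x.
Proof.
move=> Hx; case: (Rle_lt_or_eq_dec _ _ Hx) => H; first by left; apply: Rinv_0_lt_compat.
by rewrite -H Rinv_0; lra.
Qed.

Lemma R12_ge0 w1 w2 : 0 <= R12 w1 w2.
Proof.
rewrite /R12 /Rdiv; have := L0 w1; have := L0 w2; have := ind_ge0 (Eh w1 w2).
have := Rinv_ge0' (PE_ge0 Eh w1); move=> *.
repeat apply: Rmult_le_pos => //.
Qed.

Lemma cc_pos_Eh w1 w2 : 0 < cc w1 w2 -> Eh w1 w2.
Proof.
move/sum_pos_ex => [w [_ H]]; move: H; rewrite /ind.
case Hc: (E1 w1 w && E2 w2 w); last by move=> /=; lra.
move=> _; case/andP: Hc => h1 h2; case: eqh => _ [hs ht].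
exact: ht (s1 h1) (hs _ _ (s2 h2)).
Qed.

Lemma Term_le w1 w2 : Term w1 w2 <= R12 w1 w2.
Proof.
rewrite Term_val; case: (Rle_lt_or_eq_dec _ _ (cc_ge0 w1 w2)) => Hc; last first.
  rewrite -Hc Rmult_0_r; exact: R12_ge0.
rewrite /R12 /ind (cc_pos_Eh Hc) Rmult_1_r.
case: (Rle_lt_or_eq_dec _ _ (PE_ge0 Eh w1)) => Hp; last by rewrite -Hp /Rdiv ?(Rmult_0_r, Rmult_0_l, Rinv_0); lra.
right; field; split; lra.
Qed.

Lemma sumR12 w1 : List.In w1 r -> \big[Rplus/0]_(w2 <- r) R12 w1 w2 <= L w1.
Proof.
move=> Hw1; rewrite /R12.
rewrite (@sum_ext _ r _ (fun w2 => (L w2 * ind (Eh w1 w2)) * (L w1 / ph w1))); last by move=> w2 _; rewrite /Rdiv; ring.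
rewrite sumZr -/(PE Eh w1).
case: (Rle_lt_or_eq_dec _ _ (L0 w1)) => Hl; last by rewrite -Hl /Rdiv; lra.
have := PE_pos (reflh w1) Hw1 Hl => Hp; right; field; lra.
Qed.

Lemma D_le : \big[Rplus/0]_(w <- r) (L w * tq w) <= \big[Rplus/0]_(w <- r) L w.
Proof.
rewrite D_eq; apply: sum_le => w1 Hw1; apply: Rle_trans (sumR12 Hw1).
by apply: sum_le => w2 _; apply: Term_le.
Qed.

Lemma negcmi_le : - cmi <= \big[Rplus/0]_(w <- r) (L w * tq w) - \big[Rplus/0]_(w <- r) L w.
Proof.
rewrite stepA /Rminus -(sumN r L) -sumD; apply: sum_le => w Hw; have := termA Hw; lra.
Qed.

Lemma gibbs : 0 <= cmi.
Proof. have := negcmi_le; have := D_le; lra. Qed.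

Lemma gibbs_eq : cmi <= 0 -> forall w, List.In w r -> p w * ph w = p1 w * p2 w.
Proof.
move=> Hc.
have hD : \big[Rplus/0]_(w <- r) L w <= \big[Rplus/0]_(w <- r) (L w * tq w).
  have := negcmi_le; lra.
have hA : forall w, List.In w r -> 0 < L w -> tq w = 1.
  move=> w Hw Hl; apply: termA_eq => //.
  apply: (@sum_eq_le _ r (fun w => L w * (ln (p1 w) + ln (p2 w) - ln (p w) - ln (ph w)))
     (fun w => L w * tq w - L w)) => //; first exact: termA.
  rewrite sumD sumN -stepA; have := negcmi_le; have := D_le; lra.
have hB1 : forall w1, List.In w1 r ->
    \big[Rplus/0]_(w2 <- r) Term w1 w2 = \big[Rplus/0]_(w2 <- r) R12 w1 w2.
  apply: sum_eq_le.
    by move=> w1 _; apply: sum_le => w2 _; apply: Term_le.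
  rewrite -D_eq; apply: Rle_trans hD; apply: sum_le => w1 Hw1; exact: sumR12.
have hB : forall w1 w2, List.In w1 r -> List.In w2 r -> Term w1 w2 = R12 w1 w2.
  move=> w1 w2 H1; apply: sum_eq_le; first by move=> *; apply: Term_le.
  by rewrite hB1 //; lra.
move=> w Hw; case: (Rle_lt_or_eq_dec _ _ (PE_ge0 E12 w)) => Hp.
  have [w' [Hw' [Hl' He]]] := PE_pos_ex Hp.
  have := hA w' Hw' Hl'; rewrite /tq => Ht.
  have pp := PE_pos (refl12 w') Hw' Hl'; have pph := PE_pos (reflh w') Hw' Hl'.
  case/andP: (He) => h1 h2.
  rewrite (PE_inv eq12 He) (PE_inv eq1 h1) (PE_inv eq2 h2) (PE_inv eqh (s1 h1)).
  have : p1 w' * p2 w' = ph w' * p w'.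
    by rewrite -[RHS]Rmult_1_r -Ht; field; split; lra.
  lra.
rewrite -Hp Rmult_0_l.
case: (Rle_lt_or_eq_dec _ _ (PE_ge0 E1 w)) => H1; last by rewrite -H1; ring.
case: (Rle_lt_or_eq_dec _ _ (PE_ge0 E2 w)) => H2; last by rewrite -H2; ring.
exfalso.
have [w1 [Hw1 [Hl1 He1]]] := PE_pos_ex H1.
have [w2 [Hw2 [Hl2 He2]]] := PE_pos_ex H2.
have Hcc : cc w1 w2 = 0.
  rewrite Hp; apply: sum_ext => w' _; rewrite /E12.
  by rewrite (equivb_l w' eq1 He1) (equivb_l w' eq2 He2).
have Heh : Eh w1 w2.
  case: eqh => _ [hs ht]; exact: ht (hs _ _ (s1 He1)) (s2 He2).
have := hB w1 w2 Hw1 Hw2; rewrite Term_val Hcc Rmult_0_r /R12 /ind Heh.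
have := PE_pos (reflh w1) Hw1 Hl1 => Hph Heq.
have : 0 < L w1 * L w2 * 1 / ph w1.
  apply: Rdiv_lt_0_compat => //; nra.
lra.
Qed.

End Gibbs.

Lemma RmultA' : associative Rmult. Proof. by move=> a b c; rewrite Rmult_assoc. Qed.
HB.instance Definition _ := Monoid.isComLaw.Build R 1 Rmult RmultA' Rmult_comm Rmult_1_l.
HB.instance Definition _ := Monoid.isMulLaw.Build R 0 Rmult Rmult_0_l Rmult_0_r.
HB.instance Definition _ := Monoid.isAddLaw.Build R Rmult Rplus Rmult_plus_distr_r Rmult_plus_distr_l.

Lemma inP' (T : eqType) (x : T) (s : seq T) : x \in s -> List.In x s.
Proof.
elim: s => [|a s IH] //; rewrite in_cons => /orP[/eqP ->|/IH]; [left|right] => //.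
Qed.

Lemma map_eqP (I T : eqType) (f g : I -> T) (s : seq I) :
  ([seq f i | i <- s] == [seq g i | i <- s]) = all (fun i => f i == g i) s.
Proof. by elim: s => //= i s IH; rewrite eqseq_cons IH. Qed.

Lemma Xrange_eq (X : finType) (Y : eqType) k a b (x x' : inp X k) (y y' : Y) :
  (Xrange a b x' y' == Xrange a b x y) =
  [forall i : 'I_k, (a <= i < b)%N ==> (x' i == x i)].
Proof.
rewrite /Xrange map_eqP; apply/allP/forallP => H i.
  by apply/implyP => Hi; apply: H; rewrite mem_filter Hi mem_enum.
by rewrite mem_filter => /andP[Hi _]; exact: (implyP (H i) Hi).
Qed.

Lemma prod_ge0 (I : finType) (P : pred I) (F : I -> R) :
  (forall i, 0 <= F i) -> 0 <= \big[Rmult/1]_(i | P i) F i.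
Proof. by move=> H; apply: big_ind => //; [lra|move=> *; apply: Rmult_le_pos]. Qed.

Lemma prod_pos_each (I : finType) (F : I -> R) i :
  (forall i, 0 <= F i) -> 0 < \big[Rmult/1]_(i : I) F i -> 0 < F i.
Proof.
move=> H; rewrite (bigD1 i) //=; case: (Rle_lt_or_eq_dec _ _ (H i)) => // <-.
rewrite Rmult_0_l; lra.
Qed.

Lemma ln_prod (I : finType) (P : pred I) (F : I -> R) :
  (forall i, 0 < F i) ->
  ln (\big[Rmult/1]_(i | P i) F i) = \big[Rplus/0]_(i | P i) ln (F i).
Proof.
move=> H.
suff : 0 < \big[Rmult/1]_(i | P i) F i /\ ln (\big[Rmult/1]_(i | P i) F i) = \big[Rplus/0]_(i | P i) ln (F i) by case.
apply: (big_rec2 (fun a b => 0 < a /\ ln a = b)); first by split; [lra|exact: ln_1].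
move=> i a b _ [Ha Hb]; split; first by apply: Rmult_lt_0_compat.
by rewrite ln_mult // Hb.
Qed.

Lemma ind_forall (I : finType) (P : pred I) :
  ind [forall i, P i] = \big[Rmult/1]_(i : I) ind (P i).
Proof.
case: (boolP [forall i, P i]) => [/forallP H|/forallPn [i Hi]].
  by rewrite /ind big1 // => i _; rewrite H.
by rewrite /ind (bigD1 i) //= (negbTE Hi) Rmult_0_l.
Qed.

Section HnAlg.
Variables (T : Type) (r : seq T) (L : T -> R).
Hypothesis L0 : forall w, 0 <= L w.
Implicit Types A B C D : T -> T -> bool.

Lemma Hn_ext A B : (forall w w', A w w' = B w w') -> Hn r L A = Hn r L B.
Proof.
move=> H; apply: sum_ext => w _; congr (_ * ln _); apply: sum_ext => w' _; by rewrite H.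
Qed.

Lemma PEpos_in A w : (forall w, A w w) -> List.In w r -> 0 < L w -> 0 < PE r L A w.
Proof. by move=> H; apply: PE_pos. Qed.

Lemma Hn_div3 A B C : (forall w, A w w) -> (forall w, B w w) -> (forall w, C w w) ->
  \big[Rplus/0]_(w <- r) (L w * ln (PE r L A w / (PE r L B w * PE r L C w))) =
  Hn r L A - Hn r L B - Hn r L C.
Proof.
move=> hA hB hC; rewrite /Hn.
rewrite (@sum_ext _ r _ (fun w => L w * ln (PE r L A w) + - (L w * ln (PE r L B w)) + - (L w * ln (PE r L C w)))).
  by rewrite !sumD !sumN; ring.
move=> w Hw; case: (Rle_lt_or_eq_dec _ _ (L0 w)) => Hl; last by rewrite -Hl; ring.
have pA := PEpos_in hA Hw Hl; have pB := PEpos_in hB Hw Hl; have pC := PEpos_in hC Hw Hl.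
rewrite /Rdiv ln_mult //; last by apply: Rinv_0_lt_compat; apply: Rmult_lt_0_compat.
rewrite ln_Rinv; last by apply: Rmult_lt_0_compat.
rewrite ln_mult //; ring.
Qed.

Lemma Hn_div4 A B C D : (forall w, A w w) -> (forall w, B w w) -> (forall w, C w w) -> (forall w, D w w) ->
  \big[Rplus/0]_(w <- r) (L w * ln (PE r L A w * PE r L B w / (PE r L C w * PE r L D w))) =
  Hn r L A + Hn r L B - Hn r L C - Hn r L D.
Proof.
move=> hA hB hC hD; rewrite /Hn.
rewrite (@sum_ext _ r _ (fun w => L w * ln (PE r L A w) + L w * ln (PE r L B w) + - (L w * ln (PE r L C w)) + - (L w * ln (PE r L D w)))).
  by rewrite !sumD !sumN; ring.
move=> w Hw; case: (Rle_lt_or_eq_dec _ _ (L0 w)) => Hl; last by rewrite -Hl; ring.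
have pA := PEpos_in hA Hw Hl; have pB := PEpos_in hB Hw Hl; have pC := PEpos_in hC Hw Hl.
have pD := PEpos_in hD Hw Hl.
rewrite /Rdiv ln_mult //; last by apply: Rinv_0_lt_compat; apply: Rmult_lt_0_compat.
  rewrite ln_Rinv; last by apply: Rmult_lt_0_compat.
  rewrite !ln_mult //; ring.
by apply: Rmult_lt_0_compat.
Qed.
End HnAlg.

Section Level.
Unset Implicit Arguments.
Variables (X : finType) (Y : eqType) (Ysupp : nat -> seq Y) (W : chan X Y) (PX : X -> R) (k : nat).
Set Implicit Arguments.
Implicit Types A B : pred nat.
Hypothesis PX0 : forall a, 0 <= PX a.
Hypothesis PX1 : \big[Rplus/0]_(a : X) PX a = 1.
Hypothesis W0 : forall x y, 0 <= W k x y.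
Hypothesis Wsum : forall x, sumY (Ysupp k) (W k x) = 1.

Notation Om := (inp X k * Y)%type.
Definition rk : seq Om := [seq (x, y) | x <- index_enum (inp X k), y <- Ysupp k].
Definition Lk (w : Om) := law PX W w.1 w.2.

Lemma Lk0 w : 0 <= Lk w.
Proof. rewrite /Lk /law; apply: Rmult_le_pos => //; exact: prod_ge0. Qed.

Lemma Ex_bridge F : Ex Ysupp (law PX W (k:=k)) F = \big[Rplus/0]_(w <- rk) (Lk w * F w.1 w.2).
Proof. by rewrite /rk big_allpairs. Qed.

Lemma Pr_bridge E : Pr Ysupp (law PX W (k:=k)) E = \big[Rplus/0]_(w <- rk) (Lk w * ind (E w.1 w.2)).
Proof. by rewrite /Pr Ex_bridge. Qed.

Lemma in_rk x y : y \in Ysupp k -> List.In (x, y) rk.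
Proof. by move=> Hy; apply: inP'; apply: allpairs_f => //; rewrite mem_index_enum. Qed.

Lemma MI_Hn (U V : eqType) (f : inp X k -> Y -> U) (g : inp X k -> Y -> V) :
  MI Ysupp (law PX W (k:=k)) f g =
  Hn rk Lk (fun w w' => (f w'.1 w'.2 == f w.1 w.2) && (g w'.1 w'.2 == g w.1 w.2)) -
  Hn rk Lk (fun w w' => f w'.1 w'.2 == f w.1 w.2) -
  Hn rk Lk (fun w w' => g w'.1 w'.2 == g w.1 w.2).
Proof.
rewrite /MI Ex_bridge -Hn_div3 //; try exact: Lk0; try by move=> w; rewrite ?eqxx.
by apply: sum_ext => w _; rewrite !Pr_bridge.
Qed.

Lemma CMI_Hn (U V Z : eqType) (f : inp X k -> Y -> U) (g : inp X k -> Y -> V) (h : inp X k -> Y -> Z) :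
  CMI Ysupp (law PX W (k:=k)) f g h =
  Hn rk Lk (fun w w' => [&& f w'.1 w'.2 == f w.1 w.2, g w'.1 w'.2 == g w.1 w.2 & h w'.1 w'.2 == h w.1 w.2]) +
  Hn rk Lk (fun w w' => h w'.1 w'.2 == h w.1 w.2) -
  Hn rk Lk (fun w w' => (f w'.1 w'.2 == f w.1 w.2) && (h w'.1 w'.2 == h w.1 w.2)) -
  Hn rk Lk (fun w w' => (g w'.1 w'.2 == g w.1 w.2) && (h w'.1 w'.2 == h w.1 w.2)).
Proof.
rewrite /CMI Ex_bridge -Hn_div4 //; try exact: Lk0; try by move=> w; rewrite ?eqxx.
by apply: sum_ext => w _; rewrite !Pr_bridge.
Qed.

Definition EX (A : pred nat) (w w' : Om) := [forall i : 'I_k, A i ==> (w'.1 i == w.1 i)].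
Definition EXY (A : pred nat) (w w' : Om) := EX A w w' && (w'.2 == w.2).
Definition hx A := Hn rk Lk (EX A).
Definition hxy A := Hn rk Lk (EXY A).

Lemma EX_equiv A : equivb (EX A).
Proof.
split; first by move=> w; apply/forallP => i; rewrite eqxx implybT.
split; first by move=> a b /forallP H; apply/forallP => i; rewrite eq_sym.
move=> a b c /forallP H1 /forallP H2; apply/forallP => i; apply/implyP => Hi.
by rewrite (eqP (implyP (H2 i) Hi)) (implyP (H1 i) Hi).
Qed.

Lemma EXY_equiv A : equivb (EXY A).
Proof.
case: (EX_equiv A) => r1 [s1 t1]; rewrite /EXY; split; first by move=> w; rewrite r1 eqxx.
split; first by move=> a b /andP[/s1 -> /eqP ->]; rewrite eqxx.
by move=> a b c /andP[h1 /eqP e1] /andP[h2 /eqP e2]; rewrite (t1 _ _ _ h1 h2) e2 e1 eqxx.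
Qed.

Lemma EX_and A B w w' : EX A w w' && EX B w w' = EX (fun n => A n || B n) w w'.
Proof.
apply/andP/forallP => [[/forallP H1 /forallP H2] i|H]; last first.
  by split; apply/forallP => i; apply/implyP => Hi; apply: (implyP (H i)); rewrite Hi ?orbT.
by apply/implyP => /orP[Hi|Hi]; [exact: (implyP (H1 i)) | exact: (implyP (H2 i))].
Qed.

Lemma EX_sub A B w w' : (forall n, B n -> A n) -> EX A w w' -> EX B w w'.
Proof.
by move=> H /forallP H1; apply/forallP => i; apply/implyP => /H Hi; exact: (implyP (H1 i)).
Qed.

Lemma EX_ext A B w w' : (forall n, (n < k)%N -> A n = B n) -> EX A w w' = EX B w w'.
Proof. by move=> H; apply: eq_forallb => i; rewrite H. Qed.

Lemma hx_ext A B : (forall n, (n < k)%N -> A n = B n) -> hx A = hx B.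
Proof. by move=> H; apply: Hn_ext => w w'; apply: EX_ext. Qed.

Lemma hxy_ext A B : (forall n, (n < k)%N -> A n = B n) -> hxy A = hxy B.
Proof. by move=> H; apply: Hn_ext => w w'; rewrite /EXY (EX_ext _ _ H). Qed.

Lemma sum_ind_eq (x0 : X) : \big[Rplus/0]_(a : X) (PX a * ind (a == x0)) = PX x0.
Proof.
rewrite (bigD1 x0) //= eqxx /ind Rmult_1_r big1; first by rewrite Rplus_0_r.
by move=> a /negbTE ->; rewrite Rmult_0_r.
Qed.

Lemma PE_EX A w : PE rk Lk (EX A) w = \big[Rmult/1]_(i : 'I_k | A i) PX (w.1 i).
Proof.
rewrite /PE /rk big_allpairs.
transitivity (\big[Rplus/0]_(x' : inp X k) \big[Rmult/1]_(i : 'I_k) (PX (x' i) * ind (A i ==> (x' i == w.1 i)))).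
  apply: eq_bigr => x' _.
  rewrite big_split /= -ind_forall.
  transitivity (\big[Rplus/0]_(y' <- Ysupp k) (W k x' y' * ((\big[Rmult/1]_(i : 'I_k) PX (x' i)) * ind [forall i : 'I_k, A i ==> (x' i == w.1 i)]))).
    by apply: sum_ext => y' _; rewrite /Lk /law /EX /=; ring.
  by rewrite sumZr -/(sumY _ _) Wsum Rmult_1_l.
rewrite [RHS]big_mkcond /=.
transitivity (\big[Rmult/1]_(i : 'I_k) \big[Rplus/0]_(a : X) (PX a * ind (A i ==> (a == w.1 i)))).
  by rewrite bigA_distr_bigA.
apply: eq_bigr => i _.
case: (A i) => /=; first exact: sum_ind_eq.
by rewrite -[RHS]PX1; apply: eq_bigr => a _; rewrite /ind Rmult_1_r.
Qed.

Definition cst (i : 'I_k) := \big[Rplus/0]_(w <- rk) (Lk w * ln (PX (w.1 i))).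

Lemma hx_form A : hx A = \big[Rplus/0]_(i : 'I_k) (ind (A i) * cst i).
Proof.
rewrite /hx /Hn.
rewrite (@sum_ext _ rk _ (fun w => \big[Rplus/0]_(i : 'I_k) (ind (A i) * (Lk w * ln (PX (w.1 i)))))).
  rewrite sum_exchange; apply: eq_bigr => i _; by rewrite /cst sumZ.
move=> w _; rewrite PE_EX.
case: (Rle_lt_or_eq_dec _ _ (Lk0 w)) => Hl; last first.
  rewrite -Hl Rmult_0_l big1 // => i _; ring.
have Hp : 0 < \big[Rmult/1]_(i : 'I_k) PX (w.1 i).
  move: Hl; rewrite /Lk /law; case: (Rle_lt_or_eq_dec _ _ (@prod_ge0 _ predT (fun i => PX (w.1 i)) (fun i => PX0 _))) => // <-.
  rewrite Rmult_0_l; lra.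
have Hi : forall i, 0 < PX (w.1 i) by move=> i; apply: (prod_pos_each (F := fun i => PX (w.1 i))).
rewrite ln_prod // big_mkcond /= -sumZ; apply: eq_bigr => i _.
by rewrite /ind; case: (A i); ring.
Qed.

Lemma hx_mod A B : hx (fun n => A n || B n) + hx (fun n => A n && B n) = hx A + hx B.
Proof.
rewrite !hx_form -!big_split /=; apply: eq_bigr => i _.
by rewrite /ind; case: (A i); case: (B i) => /=; ring.
Qed.

Lemma hx0 : hx pred0 = 0.
Proof. by rewrite hx_form big1 // => i _; rewrite /ind /=; ring. Qed.

Lemma PE_ext E E' w : (forall w', E w w' = E' w w') -> PE rk Lk E w = PE rk Lk E' w.
Proof. by move=> H; apply: sum_ext => w' _; rewrite H. Qed.

Lemma EXY_or A B w w' : EXY A w w' && EXY B w w' = EXY (fun n => A n || B n) w w'.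
Proof. by rewrite /EXY -EX_and; case: (EX A w w'); case: (EX B w w'); case: (w'.2 == w.2). Qed.

Lemma hxy_super A B : hxy A + hxy B <= hxy (fun n => A n || B n) + hxy (fun n => A n && B n).
Proof.
have s1 : forall a b, EXY A a b -> EXY (fun n => A n && B n) a b.
  move=> a b /andP[h1 h2]; rewrite /EXY h2 andbT; apply: EX_sub h1 => n /andP[]//.
have s2 : forall a b, EXY B a b -> EXY (fun n => A n && B n) a b.
  move=> a b /andP[h1 h2]; rewrite /EXY h2 andbT; apply: EX_sub h1 => n /andP[]//.
have := gibbs rk Lk0 (EXY_equiv A) (EXY_equiv B) (EXY_equiv _) s1 s2.
rewrite /cmi (@Hn_ext _ rk Lk (E12 (EXY A) (EXY B)) (EXY (fun n => A n || B n))).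
  rewrite /hxy; lra.
by move=> w w'; rewrite /E12 EXY_or.
Qed.

Lemma EX0 w w' : EX pred0 w w' = true.
Proof. by apply/forallP. Qed.

Lemma CI_of_cmi m : (m <= k)%N ->
  hxy (fun n => (0 <= n < k)%N) + hxy pred0 - hxy (fun n => (0 <= n < m)%N) - hxy (fun n => (m <= n < k)%N) <= 0 ->
  forall (x : inp X k) (y : Y),
         let L := law PX W (k:=k) in
         let py := Pr Ysupp L (fun x' y' => y' == y) in
         0 < py ->
         Pr Ysupp L (fun x' y' => (Xrange 0 k x' y' == Xrange 0 k x y) && (y' == y)) / py =
         (Pr Ysupp L (fun x' y' => (Xrange 0 m x' y' == Xrange 0 m x y) && (y' == y)) / py) *
         (Pr Ysupp L (fun x' y' => (Xrange m k x' y' == Xrange m k x y) && (y' == y)) / py).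
Proof.
move=> Hm Hc x y L py Hpy.
have Hy : y \in Ysupp k.
  apply/negPn/negP => Hy; suff : py = 0 by lra.
  rewrite /py /Pr /Ex /sumX big1 // => x' _.
  rewrite /sumY big_seq big1 // => y' Hy'; have : y' != y by apply/eqP => E; rewrite -E Hy' in Hy.
  by move/negbTE; rewrite /ind => ->; rewrite Rmult_0_r.
have Hin := in_rk x Hy.
have s1 : forall a b, EXY (fun n => (0 <= n < m)%N) a b -> EXY pred0 a b.
  by move=> a b /andP[_ h2]; rewrite /EXY h2 EX0.
have s2 : forall a b, EXY (fun n => (m <= n < k)%N) a b -> EXY pred0 a b.
  by move=> a b /andP[_ h2]; rewrite /EXY h2 EX0.
have Hc' : cmi rk Lk (EXY (fun n => (0 <= n < m)%N)) (EXY (fun n => (m <= n < k)%N)) (EXY pred0) <= 0.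
  rewrite /cmi (@Hn_ext _ rk Lk (E12 _ _) (EXY (fun n => (0 <= n < k)%N))) //.
  move=> w w'; rewrite /E12 EXY_or; rewrite /EXY (@EX_ext _ (fun n => (0 <= n < k)%N)) // => n Hn.
  by case: (ltnP n m) => /= H; rewrite ?andbT ?andbF //=; apply: leq_trans Hm.
have := gibbs_eq Lk0 (EXY_equiv _) (EXY_equiv _) (EXY_equiv _) s1 s2 Hc' Hin.
have e1 : py = PE rk Lk (EXY pred0) (x, y).
  by rewrite /py Pr_bridge; apply: sum_ext => w' _; rewrite /EXY EX0.
have e2 : Pr Ysupp L (fun x' y' => (Xrange 0 k x' y' == Xrange 0 k x y) && (y' == y)) = PE rk Lk (EXY (fun n => (0 <= n < k)%N)) (x, y).
  by rewrite Pr_bridge; apply: sum_ext => w' _; rewrite Xrange_eq.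
have e3 : Pr Ysupp L (fun x' y' => (Xrange 0 m x' y' == Xrange 0 m x y) && (y' == y)) = PE rk Lk (EXY (fun n => (0 <= n < m)%N)) (x, y).
  by rewrite Pr_bridge; apply: sum_ext => w' _; rewrite Xrange_eq.
have e4 : Pr Ysupp L (fun x' y' => (Xrange m k x' y' == Xrange m k x y) && (y' == y)) = PE rk Lk (EXY (fun n => (m <= n < k)%N)) (x, y).
  by rewrite Pr_bridge; apply: sum_ext => w' _; rewrite Xrange_eq.
have e5 : PE rk Lk (E12 (EXY (fun n => (0 <= n < m)%N)) (EXY (fun n => (m <= n < k)%N))) (x, y) =
          PE rk Lk (EXY (fun n => (0 <= n < k)%N)) (x, y).
  apply: PE_ext => w'; rewrite /E12 EXY_or; rewrite /EXY (@EX_ext _ (fun n => (0 <= n < k)%N)) // => n Hn.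
  by case: (ltnP n m) => /= H; rewrite ?andbT ?andbF //=; apply: leq_trans Hm.
rewrite e5 e2 e3 e4 -e1 => Heq.
transitivity (PE rk Lk (EXY (fun n => (0 <= n < k)%N)) (x, y) * py / (py * py)); first by field; lra.
rewrite Heq; field; lra.
Qed.

Implicit Types s : {perm 'I_k}.
Hypothesis Hperm : forall (sigma : {perm 'I_k}) (x : inp X k) (y : Y),
    W k [ffun i => x (sigma i)] y = W k x y.

Definition px (s : {perm 'I_k}) (x : inp X k) : inp X k := [ffun i => x (s i)].
Definition pw (s : {perm 'I_k}) (w : Om) : Om := (px s w.1, w.2).

Lemma px_bij s : bijective (px s).
Proof.
exists (px s^-1) => x; apply/ffunP => i; rewrite !ffunE.
  by rewrite permKV.
by rewrite permK.
Qed.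

Lemma sum_rk_perm s (G : Om -> R) :
  \big[Rplus/0]_(w <- rk) G w = \big[Rplus/0]_(w <- rk) G (pw s w).
Proof.
rewrite /rk !big_allpairs (reindex (px s)) //; apply: onW_bij; exact: px_bij.
Qed.

Lemma Lk_perm s w : Lk (pw s w) = Lk w.
Proof.
rewrite /Lk /law /= /px Hperm; congr (_ * _).
by rewrite [RHS](reindex_inj (@perm_inj _ s)); apply: eq_bigr => i _; rewrite ffunE.
Qed.

Lemma PE_perm s E w :
  PE rk Lk E (pw s w) = PE rk Lk (fun a b => E (pw s a) (pw s b)) w.
Proof.
rewrite /PE (sum_rk_perm s); apply: sum_ext => w' _; by rewrite Lk_perm.
Qed.

Lemma Hn_perm s E : Hn rk Lk E = Hn rk Lk (fun a b => E (pw s a) (pw s b)).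
Proof.
rewrite /Hn (sum_rk_perm s); apply: sum_ext => w _; by rewrite Lk_perm PE_perm.
Qed.

Lemma forall_perm (s : {perm 'I_k}) (P : pred 'I_k) : [forall i : 'I_k, P (s i)] = [forall j : 'I_k, P j].
Proof.
apply/forallP/forallP => H j; last exact: H.
by rewrite -(permKV s j); apply: H.
Qed.

Lemma EX_perm s A A' w w' : (forall i : 'I_k, A' (s i) = A i) ->
  EX A (pw s w) (pw s w') = EX A' w w'.
Proof.
move=> H; rewrite /EX /= -[RHS](forall_perm s); apply: eq_forallb => i.
by rewrite /px !ffunE H.
Qed.

Lemma hx_perm s A A' : (forall i : 'I_k, A' (s i) = A i) -> hx A = hx A'.
Proof.
by move=> H; rewrite /hx (Hn_perm s); apply: Hn_ext => w w'; exact: EX_perm.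
Qed.

Lemma hxy_perm s A A' : (forall i : 'I_k, A' (s i) = A i) -> hxy A = hxy A'.
Proof.
by move=> H; rewrite /hxy (Hn_perm s); apply: Hn_ext => w w'; rewrite /EXY (EX_perm _ _ H).
Qed.
End Level.

Lemma In_mem (T : eqType) (x : T) (s : seq T) : List.In x s -> x \in s.
Proof. elim: s => [|a s IH] //= [->|/IH H]; rewrite in_cons ?eqxx ?H ?orbT //. Qed.

Lemma sum_swap_filter (Y : eqType) (S1 S2 : seq Y) (f : Y -> R) :
  uniq S1 -> uniq S2 ->
  \big[Rplus/0]_(y <- S1 | y \in S2) f y = \big[Rplus/0]_(y <- S2 | y \in S1) f y.
Proof.
move=> u1 u2; rewrite -big_filter -[RHS]big_filter; apply: perm_big.
apply: uniq_perm; try exact: filter_uniq.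
by move=> y; rewrite !mem_filter andbC.
Qed.

Lemma sum_filter_zero (Y : eqType) (S : seq Y) (P : pred Y) (f : Y -> R) :
  (forall y, y \in S -> ~~ P y -> f y = 0) ->
  \big[Rplus/0]_(y <- S | P y) f y = \big[Rplus/0]_(y <- S) f y.
Proof.
move=> H; rewrite [RHS](bigID P) /=.
have -> : \big[Rplus/0]_(y <- S | ~~ P y) f y = 0.
  by rewrite big_seq_cond big1 // => y /andP[Hy Hp]; apply: H.
by rewrite Rplus_0_r.
Qed.

Lemma ysum (Y : eqType) (Ss Sk : seq Y) (a b G : Y -> R) :
  uniq Ss -> uniq Sk -> (forall y, 0 <= a y) -> (forall y, y \notin Sk -> a y = 0) ->
  (forall y, y \in Ss -> b y = a y) ->
  \big[Rplus/0]_(y <- Sk) a y = 1 -> \big[Rplus/0]_(y <- Ss) b y = 1 ->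
  \big[Rplus/0]_(y <- Sk) (a y * G y) = \big[Rplus/0]_(y <- Ss) (b y * G y).
Proof.
move=> us uk a0 aSk bSs sa sb.
have aoff : forall y, y \in Sk -> y \notin Ss -> a y = 0.
  have T1 : \big[Rplus/0]_(y <- Sk | y \in Ss) a y = 1.
    rewrite sum_swap_filter // sum_filter_zero; last by move=> y _ /aSk.
    by rewrite -sb; apply: sum_ext => y Hy; rewrite bSs //; apply: In_mem.
  have T2 : \big[Rplus/0]_(y <- Sk) (if y \notin Ss then a y else 0) = 0.
    rewrite -big_mkcond; move: sa; rewrite (bigID (fun y => y \in Ss)) /= T1; lra.
  move=> y Hy Hn.
  have E := @sum_eq_le _ Sk (fun _ => 0) (fun y => if y \notin Ss then a y else 0).
  have H0 : 0 = (if y \notin Ss then a y else 0).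
    apply: E; last exact: inP' Hy.
      by move=> y' _; case: ifP => _; [apply: a0|lra].
    by rewrite T2 big1 //; lra.
  by move: H0; rewrite Hn; lra.
rewrite -(sum_filter_zero (P := fun y => y \in Ss)); last by move=> y Hy Hn; rewrite aoff // Rmult_0_l.
rewrite sum_swap_filter // sum_filter_zero; last by move=> y _ /aSk ->; rewrite Rmult_0_l.
by apply: sum_ext => y Hy; rewrite bSs //; apply: In_mem.
Qed.

Section Claw.
Unset Implicit Arguments.
Variables (X : finType) (Y : eqType) (Ysupp : nat -> seq Y) (W : chan X Y) (PX : X -> R) (x0 : X) (s k : nat).
Set Implicit Arguments.
Hypothesis Hsk : (s <= k)%N.
Hypothesis PX0 : forall a, 0 <= PX a.
Hypothesis us : uniq (Ysupp s).
Hypothesis uk : uniq (Ysupp k).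
Hypothesis Wk0 : forall x y, 0 <= W k x y.
Hypothesis Wkout : forall x y, y \notin Ysupp k -> W k x y = 0.
Hypothesis Wssum : forall x, sumY (Ysupp s) (W s x) = 1.
Hypothesis Wksum : forall x, sumY (Ysupp k) (W k x) = 1.
Hypothesis Hred : forall (z : inp X s) y, y \in Ysupp s -> W s z y = W k (pad x0 k z) y.

Definition Bk := fun i : 'I_k => (s <= val i)%N.
Definition bk : inp X k := [ffun => x0].
Definition trunc (x : inp X k) : inp X s := [ffun j => x (widen_ord Hsk j)].

Lemma pad_trunc (x : inp X k) : [forall i, Bk i ==> (x i == bk i)] -> pad x0 k (trunc x) = x.
Proof.
move/forallP => H; apply/ffunP => i; rewrite ffunE.
case: insubP => [j Hj Hv|Hn].
  rewrite ffunE; congr (x _); apply: val_inj; by rewrite /= Hv.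
have := implyP (H i); rewrite /Bk ffunE leqNgt Hn => /(_ isT) /eqP ->; done.
Qed.

Lemma trunc_pad (z : inp X s) : trunc (pad x0 k z) = z.
Proof. by apply/ffunP => j; rewrite !ffunE /= valK. Qed.

Lemma pad_cond (z : inp X s) : [forall i, Bk i ==> (pad x0 k z i == bk i)].
Proof.
apply/forallP => i; apply/implyP; rewrite /Bk => Hi; rewrite !ffunE insubN //.
by rewrite -leqNgt.
Qed.

Lemma sum_pad (G : inp X k -> R) :
  \big[Rplus/0]_(x : inp X k) ((if [forall i, Bk i ==> (x i == bk i)] then 1 else 0) * G x) =
  \big[Rplus/0]_(z : inp X s) G (pad x0 k z).
Proof.
transitivity (\big[Rplus/0]_(x : inp X k | [forall i, Bk i ==> (x i == bk i)]) G x).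
  by rewrite [RHS]big_mkcond; apply: eq_bigr => x _; case: ifP => _; ring.
rewrite (reindex_onto (pad x0 k) trunc) /=; last exact: pad_trunc.
by apply: eq_bigl => z; rewrite pad_cond trunc_pad eqxx.
Qed.

Lemma prod_pad (z : inp X s) :
  \big[Rmult/1]_(i : 'I_k | ~~ Bk i) PX (pad x0 k z i) = \big[Rmult/1]_(j : 'I_s) PX (z j).
Proof.
pose F n := PX (if @insub nat (fun n => (n < s)%N) 'I_s n is Some j then z j else x0).
transitivity (\big[Rmult/1]_(i < k | (i < s)%N) F i).
  by apply: eq_big => [i|i _]; [rewrite /Bk -ltnNge | rewrite ffunE].
rewrite -big_ord_widen //; apply: eq_bigr => j _; by rewrite /F valK.
Qed.

Lemma Ex_ext n (L : inp X n -> Y -> R) F G : (forall x y, F x y = G x y) ->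
  Ex Ysupp L F = Ex Ysupp L G.
Proof. by move=> H; apply: eq_bigr => x _; apply: eq_bigr => y _; rewrite H. Qed.

Lemma claw_bridge F :
  Ex Ysupp (claw PX W Bk bk) F = Ex Ysupp (law PX W (k:=s)) (fun z y => F (pad x0 k z) y).
Proof.
rewrite /Ex /sumX.
transitivity (\big[Rplus/0]_(x : inp X k) ((if [forall i, Bk i ==> (x i == bk i)] then 1 else 0) *
   ((\big[Rmult/1]_(i : 'I_k | ~~ Bk i) PX (x i)) * \big[Rplus/0]_(y <- Ysupp k) (W k x y * F x y)))).
  apply: eq_bigr => x _; rewrite /sumY -!sumZ; apply: sum_ext => y _; rewrite /claw; ring.
rewrite sum_pad; apply: eq_bigr => z _; rewrite prod_pad /sumY /law.
rewrite (@ysum _ (Ysupp s) (Ysupp k) (W k (pad x0 k z)) (W s z) (F (pad x0 k z))) //.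
- by rewrite -sumZ; apply: sum_ext => y _; ring.
- by move=> y; apply: Wkout.
- by move=> y; apply: Hred.
- exact: Wksum.
- exact: Wssum.
Qed.

Lemma Xrange_pad (z z' : inp X s) :
  [forall i : 'I_k, (0 <= i < s)%N ==> (pad x0 k z' i == pad x0 k z i)] =
  [forall j : 'I_s, (0 <= j < s)%N ==> (z' j == z j)].
Proof.
apply/forallP/forallP => H j.
  apply/implyP => Hj; have := implyP (H (widen_ord Hsk j)) Hj.
  by rewrite !ffunE /= valK.
apply/implyP => /andP[_ Hj]; rewrite !ffunE; case: insubP => [u _ Hu|]; last by rewrite Hj.
by have := implyP (H u); rewrite /= ltn_ord => /(_ isT).
Qed.

Lemma MI_claw :
  MI Ysupp (claw PX W Bk bk) (Xrange 0 s) (@Yout X Y k) = Ik Ysupp PX W s.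
Proof.
rewrite /Ik /MI claw_bridge; apply: Ex_ext => z y; rewrite /Pr !claw_bridge.
congr (ln (_ / (_ * _))); apply: Ex_ext => z' y'; by rewrite !Xrange_eq Xrange_pad.
Qed.
End Claw.

Section Conv.
Variable F : nat -> R.
Variable k : nat.
Hypothesis Hconv : forall j, (1 <= j)%N -> (j < k)%N -> 2 * F j <= F j.+1 + F j.-1.
Let d j := F j - F j.-1.

Lemma d_mono i j : (1 <= i)%N -> (i <= j)%N -> (j <= k)%N -> d i <= d j.
Proof.
move=> Hi Hij; elim: j Hij => [|j IH] Hij Hjk; first lia.
case: (ltnP i j.+1) => H; last by rewrite (_ : i = j.+1); [lra|lia].
have h1 : (1 <= j)%N by lia.
have h2 : (j < k)%N by lia.
have := IH ltac:(lia) ltac:(lia); have := Hconv h1 h2.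
rewrite /d /=; lra.
Qed.

Lemma up_bound a b : (1 <= a)%N -> (a <= b)%N -> (b <= k)%N -> F b - F a <= INR (b - a) * d b.
Proof.
move=> Ha; elim: b => [|b IH] Hab Hbk; first lia.
case: (ltnP a b.+1) => H; last by rewrite (_ : a = b.+1) ?subnn /=; [lra|lia].
have := IH ltac:(lia) ltac:(lia); have := @d_mono b b.+1 ltac:(lia) ltac:(lia) Hbk.
have -> : (b.+1 - a = (b - a).+1)%N by lia.
rewrite S_INR /d /= => H1 H2; have := pos_INR (b - a); nra.
Qed.

Lemma low_bound a b : (a <= b)%N -> (b <= k)%N -> INR (b - a) * d a.+1 <= F b - F a.
Proof.
elim: b => [|b IH] Hab Hbk; first by rewrite (_ : a = 0%N) /=; [lra|lia].
case: (ltnP a b.+1) => H; last by rewrite (_ : a = b.+1) ?subnn /=; [lra|lia].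
have := IH ltac:(lia) ltac:(lia); have := @d_mono a.+1 b.+1 ltac:(lia) ltac:(lia) Hbk.
have -> : (b.+1 - a = (b - a).+1)%N by lia.
rewrite S_INR /d /= => H1 H2; have := pos_INR (b - a); nra.
Qed.

Lemma conv_final s : (1 <= s)%N -> (s < k)%N ->
  F k.-1 + F 1 < F k + F 0 ->
  INR s * (F k - F 0) < INR k * (F k - F (k - s)).
Proof.
move=> Hs Hsk Hstr.
set m := (k - s)%N.
have Hm : (1 <= m)%N by lia.
have HA := @up_bound 1 m (leqnn 1) Hm ltac:(lia).
have HB := @low_bound m k.-1 ltac:(lia) ltac:(lia).
have Hd1m := @d_mono 1 m (leqnn 1) Hm ltac:(lia).
have Hdmm := @d_mono m m.+1 Hm ltac:(lia) ltac:(lia).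
have Hdmk := @d_mono m k Hm ltac:(lia) (leqnn k).
have Hd1k : d 1 < d k by rewrite /d /=; lra.
have Ek : INR k = INR s + INR m by rewrite -plus_INR; congr INR; lia.
have E1 : INR (m - 1) = INR m - 1 by rewrite minus_INR /=; lia || lra.
have E2 : INR (k.-1 - m) = INR s - 1.
  have -> : (k.-1 - m = (s - 1))%N by lia.
  by rewrite minus_INR /=; [lra|lia].
rewrite E1 in HA; rewrite E2 in HB.
have Hsm : 1 <= INR s by apply: (le_INR 1); lia.
have Hmm : 1 <= INR m by apply: (le_INR 1); lia.
have Fk : F k - F k.-1 = d k by [].
have F1 : F 1 - F 0 = d 1 by [].
rewrite Ek.
have HBB : (INR s - 1) * d m <= (INR s - 1) * d m.+1 by apply: Rmult_le_compat_l; lra.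
nra.
Qed.

End Conv.

Lemma tperm_cond k (a b : 'I_k) (A A' : pred nat) :
  A' b = A a -> A' a = A b ->
  (forall i : 'I_k, (val i <> val a) -> (val i <> val b) -> A' i = A i) ->
  forall i, A' (tperm a b i) = A i.
Proof.
move=> H1 H2 H3 i; case: tpermP => [->|->|Ha Hb] //.
by apply: H3 => E; [apply: Ha|apply: Hb]; apply: val_inj.
Qed.

Section Final.
Unset Implicit Arguments.
Variables (X : finType) (Y : eqType) (Ysupp : nat -> seq Y) (W : chan X Y) (PX : X -> R) (k : nat).
Set Implicit Arguments.
Hypothesis PX0 : forall a, 0 <= PX a.
Hypothesis PX1 : \big[Rplus/0]_(a : X) PX a = 1.
Hypothesis W0 : forall x y, 0 <= W k x y.
Hypothesis Wsum : forall x, sumY (Ysupp k) (W k x) = 1.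
Hypothesis Hperm : forall (sigma : {perm 'I_k}) (x : inp X k) (y : Y),
    W k [ffun i => x (sigma i)] y = W k x y.

Definition GG (A : pred nat) := hxy Ysupp W PX k A - hx Ysupp W PX k A.
Definition FF (j : nat) := GG (fun n => (n < j)%N).

Lemma GG_ext (A B : pred nat) : (forall n, (n < k)%N -> A n = B n) -> GG A = GG B.
Proof. by move=> H; rewrite /GG (hxy_ext _ _ _ H) (hx_ext _ _ _ H). Qed.

Lemma GG_perm (s : {perm 'I_k}) (A A' : pred nat) : (forall i : 'I_k, A' (s i) = A i) -> GG A = GG A'.
Proof. by move=> H; rewrite /GG (hxy_perm Ysupp PX Hperm H) (hx_perm Ysupp PX Hperm H). Qed.

Lemma GG_super (A B : pred nat) : GG A + GG B <= GG (fun n => A n || B n) + GG (fun n => A n && B n).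
Proof.
have := hxy_super Ysupp PX0 W0 A B; have := hx_mod PX0 PX1 W0 Wsum A B; rewrite /GG; lra.
Qed.

Lemma Ik_FF : Ik Ysupp PX W k = FF k - FF 0.
Proof.
rewrite /Ik (MI_Hn Ysupp PX0 W0) /FF /GG.
rewrite (@hx_ext _ _ Ysupp W PX k (fun n => (n < 0)%N) pred0) // (hx0 PX0 PX1 W0 Wsum).
rewrite /hxy /hx.
rewrite (@Hn_ext _ _ _ _ (EXY (fun n => (n < k)%N))); last first.
  by move=> w w'; rewrite Xrange_eq.
rewrite (@Hn_ext _ _ _ (fun w w' => Xrange 0 k w'.1 w'.2 == Xrange 0 k w.1 w.2) (EX (fun n => (n < k)%N))); last first.
  by move=> w w'; rewrite Xrange_eq.
rewrite (@Hn_ext _ _ _ (fun w w' => Yout w'.1 w'.2 == Yout w.1 w.2) (EXY (fun n => (n < 0)%N))); last first.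
  by move=> w w'; rewrite /EXY EX0.
ring.
Qed.


Lemma FF_conv j : (1 <= j)%N -> (j < k)%N -> 2 * FF j <= FF j.+1 + FF j.-1.
Proof.
move=> H1 H2.
have := GG_super (fun n => (n < j)%N) (fun n => (n < j.-1)%N || (n == j)).
rewrite (@GG_ext (fun n => (n < j)%N || ((n < j.-1)%N || (n == j))) (fun n => (n < j.+1)%N)); last by move=> n _; apply/idP/idP; lia.
rewrite (@GG_ext (fun n => (n < j)%N && ((n < j.-1)%N || (n == j))) (fun n => (n < j.-1)%N)); last by move=> n _; apply/idP/idP; lia.
have Ha : (j.-1 < k)%N by lia.
rewrite -(@GG_perm (tperm (Ordinal Ha) (Ordinal H2)) (fun n => (n < j)%N)).
  rewrite /FF; lra.
apply: (@tperm_cond k (Ordinal Ha) (Ordinal H2) (fun n => (n < j)%N) (fun n => (n < j.-1)%N || (n == j))) => /=; try (apply/idP/idP; lia).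
move=> i Hi1 Hi2. apply/idP/idP; lia.
Qed.

Lemma FF_rev s : (s <= k)%N -> GG (fun n => (s <= n < k)%N) = FF (k - s).
Proof.
move=> Hs; rewrite /FF (@GG_perm (perm (@rev_ord_inj k)) (fun n => (n < k - s)%N) (fun n => (s <= n < k)%N)) //.
by move=> i; rewrite permE /=; have := ltn_ord i => Hi; apply/idP/idP; lia.
Qed.


Lemma FF_strict : (2 <= k)%N ->
  (hxy Ysupp W PX k (fun n => (0 <= n < k)%N) + hxy Ysupp W PX k pred0
   - hxy Ysupp W PX k (fun n => (0 <= n < k.-1)%N) - hxy Ysupp W PX k (fun n => (k.-1 <= n < k)%N) <= 0 -> False) ->
  FF k.-1 + FF 1 < FF k + FF 0.
Proof.
move=> Hk NC; apply: Rnot_le_lt => Hle; apply: NC.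
have Hm := hx_mod PX0 PX1 W0 Wsum (fun n => (n < k.-1)%N) (fun n => (k.-1 <= n < k)%N).
rewrite (@hx_ext _ _ Ysupp W PX k (fun n => (n < k.-1)%N || (k.-1 <= n < k)%N) (fun n => (n < k)%N)) in Hm; last by move=> n Hn; apply/idP/idP; lia.
rewrite (@hx_ext _ _ Ysupp W PX k (fun n => (n < k.-1)%N && (k.-1 <= n < k)%N) (fun n => (n < 0)%N)) in Hm; last by move=> n Hn; apply/idP/idP; lia.
have Ha : (0 < k)%N by lia.
have Hb : (k.-1 < k)%N by lia.
have H1 : FF 1 = GG (fun n => (k.-1 <= n < k)%N).
  rewrite /FF; apply: (@GG_perm (tperm (Ordinal Ha) (Ordinal Hb))).
  apply: (@tperm_cond k (Ordinal Ha) (Ordinal Hb) (fun n => (n < 1)%N) (fun n => (k.-1 <= n < k)%N)) => /=; try (apply/idP/idP; lia).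
  move=> i Hi1 Hi2; have := ltn_ord i => Hi; apply/idP/idP; lia.
rewrite (@hxy_ext _ _ Ysupp W PX k (fun n => (0 <= n < k)%N) (fun n => (n < k)%N)) //.
rewrite (@hxy_ext _ _ Ysupp W PX k pred0 (fun n => (n < 0)%N)) //.
rewrite (@hxy_ext _ _ Ysupp W PX k (fun n => (0 <= n < k.-1)%N) (fun n => (n < k.-1)%N)) //.
move: Hle; rewrite H1 /FF /GG; lra.
Qed.

End Final.

Theorem lemma1 (X : finType) (Y : eqType) (x0 : X) (K : option nat)
  (Ysupp : nat -> seq Y) (W : chan X Y) (PX : X -> R) :
  is_RAC Ysupp W ->
  perm_invariant K W ->
  reducible K x0 Ysupp W ->
  is_dist PX ->
  friendly Ysupp K x0 PX W ->
  interference Ysupp K PX W ->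
  forall s k : nat, (1 <= s)%N -> (s < k)%N -> inK K k ->
    Rlt (Rdiv (Ik Ysupp PX W k) (INR k)) (Rdiv (Ik Ysupp PX W s) (INR s)).
Proof.
move=> HRAC Hperm Hred [PX0 PX1] Hfr Hint s k Hs Hsk Hk.
have [uk Hk'] := HRAC k.
have [us Hs'] := HRAC s.
have W0k : forall x y, 0 <= W k x y by move=> x y; case: (Hk' x) => H _; exact: H.
have Wkout : forall x y, y \notin Ysupp k -> W k x y = 0 by move=> x y; case: (Hk' x) => _ [H _]; exact: H.
have Wsum : forall x, sumY (Ysupp k) (W k x) = 1 by move=> x; case: (Hk' x) => _ [_ H]; exact: H.
have Wssum : forall x, sumY (Ysupp s) (W s x) = 1 by move=> x; case: (Hs' x) => _ [_ H]; exact: H.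
have Hpk := Hperm k Hk.
have Hredsk : forall (z : inp X s) y, y \in Ysupp s -> W s z y = W k (pad x0 k z) y.
  by move=> z y; apply: Hred.
have Hsk' : (s <= k)%N by lia.
have HF := Hfr s k Hsk' Hk.
have E := MI_claw PX Hsk' us uk W0k Wkout Wssum Wsum Hredsk.
rewrite /Bk /bk in E; rewrite E in HF.
have XE : forall a b (w w' : inp X k * Y),
    (Xrange a b w'.1 w'.2 == Xrange a b w.1 w.2) = EX (fun n => (a <= n < b)%N) w w'.
  by move=> *; exact: Xrange_eq.
rewrite (CMI_Hn Ysupp PX0 W0k) in HF.
rewrite (@Hn_ext _ _ _ _ (EXY (fun n => (n < k)%N))) in HF; last first.
  move=> w w'; rewrite !XE /EXY /Yout andbCA EX_and andbC; congr andb.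
  by apply: EX_ext => n Hn; apply/idP/idP; lia.
rewrite (@Hn_ext _ _ _ (fun w w' => Xrange s k w'.1 w'.2 == Xrange s k w.1 w.2) (EX (fun n => (s <= n < k)%N))) in HF; last first.
  by move=> w w'; rewrite !XE.
rewrite (@Hn_ext _ _ _ (fun w w' => (Xrange 0 s w'.1 w'.2 == Xrange 0 s w.1 w.2) && (Xrange s k w'.1 w'.2 == Xrange s k w.1 w.2)) (EX (fun n => (n < k)%N))) in HF; last first.
  move=> w w'; rewrite !XE EX_and.
  by apply: EX_ext => n Hn; apply/idP/idP; lia.
rewrite (@Hn_ext _ _ _ (fun w w' => (Yout w'.1 w'.2 == Yout w.1 w.2) && (Xrange s k w'.1 w'.2 == Xrange s k w.1 w.2)) (EXY (fun n => (s <= n < k)%N))) in HF; last first.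
  by move=> w w'; rewrite !XE /EXY /Yout andbC.
have HR := FF_rev Ysupp PX Hpk Hsk'.
rewrite /GG in HR.
have HIk := Ik_FF PX0 PX1 W0k Wsum.
have Hconv := FF_conv PX0 PX1 W0k Wsum Hpk.
have Hk2 : (2 <= k)%N by lia.
have Hstr := FF_strict PX0 PX1 W0k Wsum Hpk Hk2.
have Hfin := conv_final Hconv Hs Hsk.
have Hst : FF Ysupp W PX k k.-1 + FF Ysupp W PX k 1 < FF Ysupp W PX k k + FF Ysupp W PX k 0.
  apply: Hstr => Hc.
  have H1 : (1 <= k.-1)%N by lia.
  have H2 : (k.-1 < k)%N by lia.
  apply: (Hint k k.-1 k Hk H1 H2 (leqnn k)).
  exact: (CI_of_cmi PX0 W0k (leq_pred k) Hc).
have Hf := Hfin Hst.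
have HFk : FF Ysupp W PX k k - FF Ysupp W PX k (k - s) <= Ik Ysupp PX W s.
  rewrite -HR /FF /GG /hxy /hx; lra.
rewrite -HIk in Hf.
have Hk0 : 0 < INR k by apply: lt_0_INR; lia.
have Hs0 : 0 < INR s by apply: lt_0_INR; lia.
have Hm : INR s * Ik Ysupp PX W k < INR k * Ik Ysupp PX W s.
  have := Rmult_le_compat_l (INR k) _ _ (Rlt_le _ _ Hk0) HFk; lra.
have -> : Ik Ysupp PX W k / INR k = (INR s * Ik Ysupp PX W k) / (INR k * INR s) by field; lra.
have -> : Ik Ysupp PX W s / INR s = (INR k * Ik Ysupp PX W s) / (INR k * INR s) by field; lra.
apply: Rmult_lt_compat_r => //; apply: Rinv_0_lt_compat; nra.
Qed.
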